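(* Let $G$ be a twin-free simple graph on vertex set $\{1,\dots,n\}$, and suppose that for some $1\le m\le n$ the set $M=\{1,2,\dots,m\}$ is an identifying code of $G$. Then the lexicographic algorithm (Algorithm 1) applied to $G$ returns an identifying code $C$ with $C\subseteq M$.
   Context: Vertices of $G$ are identified with the integers $1,\dots,n$ and ordered by the usual order. For a vertex $v$, $N(v)=\{v\}\cup\{w : vw\in E(G)\}$ is its closed neighbourhood. A set $C\subseteq V(G)$ is an identifying code if the sets $N(v)\cap C$, $v\in V(G)$, are all nonempty and pairwise distinct. $G$ is twin-free if $N(v)\neq N(w)$ for all distinct vertices $v,w$. The lexicographic algorithm (Algorithm 1): set $C_0=\emptyset$. For $j=1,2,\dots,n$ in turn: (i) if $N(j)\cap C_{j-1}=\emptyset$, set $C_j=C_{j-1}\cup\{\min N(j)\}$; (ii) otherwise, if there exists $k\in\{1,\dots,j-1\}$ with $N(k)\cap C_{j-1}=N(j)\cap C_{j-1}$, let $k$ be the least such index; if $N(j)\neq N(k)$ set $C_j=C_{j-1}\cup\{\min(N(j)\triangle N(k))\}$, while if $N(j)=N(k)$ the algorithm stops immediately and returns ''failure''; (iii) otherwise set $C_j=C_{j-1}$. If the algorithm never fails, it returns $C_n$. Here $\triangle$ denotes symmetric difference. *)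

(* Defs.v *)
From mathcomp Require Import all_boot.
Set Implicit Arguments. Unset Strict Implicit. Unset Printing Implicit Defensive.

(* A simple graph on the vertex set 'I_n (vertex i : 'I_n stands for i+1 in
   the paper; the order is the usual order of naturals, so it is preserved). *)
Definition simple_graph (n : nat) (e : rel 'I_n) : Prop :=
  symmetric e /\ irreflexive e.

Definition cnbhd n (e : rel 'I_n) (v : 'I_n) : {set 'I_n} :=
  [set w | (w == v) || e v w].

Definition twin_free n (e : rel 'I_n) : Prop :=
  forall v w : 'I_n, v <> w -> cnbhd e v <> cnbhd e w.

Definition identifying_code n (e : rel 'I_n) (C : {set 'I_n}) : Prop :=
  (forall v : 'I_n, cnbhd e v :&: C != set0) /\
  (forall v w : 'I_n, v <> w -> cnbhd e v :&: C <> cnbhd e w :&: C).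

Definition setmin n (A : {set 'I_n}) : option 'I_n :=
  [pick i in A | [forall j in A, (i <= j)%N]].

Definition add_min n (C A : {set 'I_n}) : option {set 'I_n} :=
  omap (fun x => x |: C) (setmin A).

(* Step j of Algorithm 1, given C_{j-1}; None = "failure". *)
Definition lex_step n (e : rel 'I_n) (C : {set 'I_n}) (j : 'I_n)
  : option {set 'I_n} :=
  if cnbhd e j :&: C == set0 then add_min C (cnbhd e j)
  else match [pick k : 'I_n | ((k < j)%N && (cnbhd e k :&: C == cnbhd e j :&: C))
                               & [forall k' : 'I_n,
                                   ((k' < j)%N && (cnbhd e k' :&: C == cnbhd e j :&: C))
                                   ==> (k <= k')%N]] with
       | Some k =>
           if cnbhd e j != cnbhd e k
           then add_min C ((cnbhd e j :\: cnbhd e k) :|: (cnbhd e k :\: cnbhd e j))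
           else None
       | None => Some C
       end.

Definition lex_algorithm n (e : rel 'I_n) : option {set 'I_n} :=
  foldl (fun oC j => if oC is Some C then lex_step e C j else None)
        (Some set0) (enum 'I_n).

(* Main.v *)
Require Import Defs.
From mathcomp Require Import all_boot.

Section Aux.
Variable n : nat.
Implicit Types A B C D : {set 'I_n}.

Lemma setmin_spec (m : nat) A :
  A :&: [set i : 'I_n | (i < m)%N] != set0 ->
  exists x, setmin A = Some x /\ x \in A /\ (x < m)%N.
Proof.
case/set0Pn=> y; rewrite !inE => /andP[yA ym].
rewrite /setmin; case: pickP => [x /andP[xA /forallP H] | H].
  exists x; split=> //; split=> //.
  have := H y; rewrite yA /= => xy; exact: leq_ltn_trans xy ym.
exfalso; case: (@arg_minnP _ y (fun i : 'I_n => i \in A) (fun i : 'I_n => val i) yA) => x xA minx.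
have := H x; rewrite xA /=; move/negP; apply; apply/forallP=> z.
by apply/implyP=> zA; apply: minx.
Qed.

Lemma trace_mono A B C (C' : {set 'I_n}) : C \subset C' ->
  A :&: C <> B :&: C -> A :&: C' <> B :&: C'.
Proof.
move=> sub ne eq; apply: ne; apply/setP=> x; move/setP: eq => /(_ x).
rewrite !inE; case xC: (x \in C); last by rewrite !andbF.
by rewrite (subsetP sub x xC) !andbT.
Qed.

Lemma ne0_mono A C (C' : {set 'I_n}) : C \subset C' -> A :&: C != set0 -> A :&: C' != set0.
Proof.
move=> sub /set0Pn[x]; rewrite inE => /andP[xA xC]; apply/set0Pn; exists x.
by rewrite inE xA (subsetP sub x xC).
Qed.

Lemma symdiff_M A B M : A :&: M <> B :&: M ->
  ((A :\: B) :|: (B :\: A)) :&: M != set0.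
Proof.
move=> ne; apply/negP=> /eqP H; apply: ne; apply/setP=> x.
move/setP: H => /(_ x); rewrite !inE.
by case: (x \in A); case: (x \in B); case: (x \in M).
Qed.

Lemma add_sep A B C x : x \in ((A :\: B) :|: (B :\: A)) ->
  A :&: (x |: C) <> B :&: (x |: C).
Proof.
move=> hx eq; move/setP: eq => /(_ x); move: hx; rewrite !inE eqxx /= !andbT.
by case: (x \in A); case: (x \in B).
Qed.

End Aux.
Arguments setmin_spec {n m A}.
Arguments trace_mono {n A B C C'}.
Arguments ne0_mono {n A C C'}.
Arguments symdiff_M {n A B M}.
Arguments add_sep {n A B} C {x}.

Definition Inv {n} (e : rel 'I_n) m (i : nat) (C : {set 'I_n}) : Prop :=
  C \subset [set v : 'I_n | (v < m)%N] /\
  (forall v : 'I_n, (v < i)%N -> cnbhd e v :&: C != set0) /\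
  (forall v w : 'I_n, (v < i)%N -> (w < i)%N -> v <> w ->
     cnbhd e v :&: C <> cnbhd e w :&: C).

Lemma ltS_case n (v j : 'I_n) : (v < j.+1)%N -> v = j \/ (v < j)%N.
Proof.
rewrite ltnS leq_eqVlt => /orP[/eqP h|h]; [left; exact: val_inj | by right].
Qed.

Lemma step_ok {n} (e : rel 'I_n) m C (j : 'I_n) :
  twin_free e -> identifying_code e [set i : 'I_n | (i < m)%N] ->
  Inv e m j C -> exists C', lex_step e C j = Some C' /\ Inv e m j.+1 C'.
Proof.
move=> tf [idne iddi] [sub [ne di]].
rewrite /lex_step.
case: ifP => [/eqP N0 | /negbT N0].
  have [x [hx [xA xm]]] := setmin_spec (idne j).
  rewrite /add_min hx /=.
  have subx : C \subset x |: C by apply/subsetP=> y yC; rewrite inE yC orbT.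
  exists (x |: C); split=> //; split; last split.
  - apply/subsetP=> y; rewrite !inE => /orP[/eqP->//|yC].
    by have := subsetP sub y yC; rewrite inE.
  - move=> v /ltS_case[->|vj]; last exact: ne0_mono subx (ne v vj).
    by apply/set0Pn; exists x; rewrite in_setI in_setU1 eqxx xA.
  - have key : forall v : 'I_n, (v < j)%N -> cnbhd e v :&: (x |: C) <> cnbhd e j :&: (x |: C).
      move=> v vj; apply: trace_mono subx _; rewrite N0 => h.
      by move: (ne v vj); rewrite h eqxx.
    move=> v w /ltS_case[->|vj] /ltS_case[->|wj] vw //.
    + by move=> h; apply: (key w wj); rewrite h.
    + exact: key.
    + exact: trace_mono subx (di v w vj wj vw).
case: pickP => [k /andP[/andP[kj /eqP tr] _] | Hnone].
  have jk : j <> k by move=> h; move: kj; rewrite h ltnn.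
  case: ifP => [Njk | /negbFE /eqP Njk]; last by case: (tf j k jk).
  have [x [hx [xA xm]]] := setmin_spec (symdiff_M (iddi j k jk)).
  rewrite /add_min hx /=.
  have subx : C \subset x |: C by apply/subsetP=> y yC; rewrite inE yC orbT.
  exists (x |: C); split=> //; split; last split.
  - apply/subsetP=> y; rewrite !inE => /orP[/eqP->//|yC].
    by have := subsetP sub y yC; rewrite inE.
  - move=> v /ltS_case[->|vj]; first exact: ne0_mono subx N0.
    exact: ne0_mono subx (ne v vj).
  - have key : forall v : 'I_n, (v < j)%N -> cnbhd e v :&: (x |: C) <> cnbhd e j :&: (x |: C).
      move=> v vj; case: (eqVneq v k) => [->|vk].
        by move=> h; apply: (add_sep C xA); rewrite h.
      apply: trace_mono subx _; rewrite -tr; exact: di v k vj kj (elimN eqP vk).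
    move=> v w /ltS_case[->|vj] /ltS_case[->|wj] vw //.
    + by move=> h; apply: (key w wj); rewrite h.
    + exact: key.
    + exact: trace_mono subx (di v w vj wj vw).
exists C; split=> //; split=> //; split.
  by move=> v /ltS_case[->|vj]; [exact: N0 | exact: ne].
have key : forall v : 'I_n, (v < j)%N -> cnbhd e v :&: C <> cnbhd e j :&: C.
  move=> v vj h; have := Hnone v; rewrite vj h eqxx /=; move/negP; apply.
  apply/forallP=> k'; apply/implyP=> /andP[k'j /eqP h'].
  case: (eqVneq k' v) => [->//|k'v].
  by case: (di k' v k'j vj (elimN eqP k'v)); rewrite h h'.
move=> v w /ltS_case[->|vj] /ltS_case[->|wj] vw //.
+ by move=> h; apply: (key w wj); rewrite h.
+ exact: key.
+ exact: di.
Qed.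

Theorem proposition2 (n : nat) (e : rel 'I_n) (m : nat) :
  simple_graph e -> twin_free e ->
  (1 <= m)%N -> (m <= n)%N ->
  identifying_code e [set i : 'I_n | (i < m)%N] ->
  exists C : {set 'I_n},
    lex_algorithm e = Some C /\ identifying_code e C /\
    C \subset [set i : 'I_n | (i < m)%N].
Proof.
move=> _ tf _ _ idM.
have main : forall i, (i <= n)%N -> exists C,
    foldl (fun oC j => if oC is Some C then lex_step e C j else None)
      (Some set0) (take i (enum 'I_n)) = Some C /\ Inv e m i C.
  elim=> [_|i IH lein].
    exists set0; rewrite take0; split=> //; split; first exact: sub0set.
    by split.
  have [C [eqC invC]] := IH (ltnW lein).
  have x0 : 'I_n := Ordinal lein.
  rewrite (take_nth x0) ?size_enum_ord // foldl_rcons eqC.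
  have hv := nth_enum_ord x0 lein.
  have := @step_ok n e m C (nth x0 (enum 'I_n) i) tf idM.
  rewrite hv => /(_ invC) [C' [h1 h2]]; by exists C'.
have [C [eqC [sub [ne di]]]] := main n (leqnn n).
rewrite take_oversize ?size_enum_ord // in eqC.
exists C; split=> //; split=> //; split.
  by move=> v; apply: ne.
by move=> v w; apply: di.
Qed.
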